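(* Let $\mathcal{X}_1,\mathcal{X}_2$ be non-empty sets, $\mathcal{B}_i\subseteq\mathcal{P}(\mathcal{X}_i)\setminus\{\emptyset\}$, and $\underline{P}_i$ a coherent conditional lower prevision on $\mathcal{C}_i\subseteq\mathcal{C}(\mathcal{X}_i)$ with natural extension $\underline{E}_i$ to $\mathcal{C}(\mathcal{X}_i)$, for $i\in\{1,2\}$. Let $\{i,j\}=\{1,2\}$. Then for any $f_i\in\mathcal{G}(\mathcal{X}_i)$, any non-empty $B_i\subseteq\mathcal{X}_i$ and any $B_j\in\mathcal{B}_j$, $$(\underline{P}_1\otimes\underline{P}_2)(f_i\vert B_i\cap B_j)=(\underline{P}_1\otimes\underline{P}_2)(f_i\vert B_i)=\underline{E}_i(f_i\vert B_i).$$
   Context: Gambles on a non-empty set $\mathcal{X}$ are bounded real functions; $\mathcal{G}(\mathcal{X})$ is the set of gambles, $\mathcal{G}_{>0}(\mathcal{X})$ the non-negative non-zero gambles, $\mathbb{I}_A$ the indicator of $A$. For $\mathcal{A}\subseteq\mathcal{G}(\mathcal{X})$: $\mathrm{posi}(\mathcal{A}):=\{\sum_{i=1}^n\lambda_if_i\colon n\in\mathbb{N},\lambda_i>0,f_i\in\mathcal{A}\}$, $\mathcal{E}(\mathcal{A}):=\mathrm{posi}(\mathcal{A}\cup\mathcal{G}_{>0}(\mathcal{X}))$. A coherent set of desirable gambles $\mathcal{D}\subseteq\mathcal{G}(\mathcal{X})$ satisfies: (D1) $f\geq0,f\neq0\Rightarrow f\in\mathcal{D}$; (D2) $f\in\mathcal{D},\lambda>0\Rightarrow\lambda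 f\in\mathcal{D}$; (D3) $f,g\in\mathcal{D}\Rightarrow f+g\in\mathcal{D}$; (D4) $f\leq0\Rightarrow f\notin\mathcal{D}$. $\mathcal{C}(\mathcal{X}):=\mathcal{G}(\mathcal{X})\times(\mathcal{P}(\mathcal{X})\setminus\{\emptyset\})$; a conditional lower prevision on $\mathcal{C}\subseteq\mathcal{C}(\mathcal{X})$ is a map $(f,B)\mapsto\underline{P}(f\vert B)\in\mathbb{R}\cup\{\pm\infty\}$. For $\mathcal{D}\subseteq\mathcal{G}(\mathcal{X})$, $\underline{P}_{\mathcal{D}}(f\vert B):=\sup\{\mu\in\mathbb{R}\colon[f-\mu]\mathbb{I}_B\in\mathcal{D}\}$. $\underline{P}$ is coherent if $\underline{P}=\underline{P}_{\mathcal{D}}$ on its domain for some coherent set of desirable gambles $\mathcal{D}$. For coherent $\underline{P}$ on $\mathcal{C}$, $\mathcal{E}(\underline{P}):=\mathcal{E}(\{[f-\mu]\mathbb{I}_B\colon(f,B)\in\mathcal{C},\mu<\underline{P}(f\vert B)\})$ and its natural extension is $\underline{E}(f\vert B):=\underline{P}_{\mathcal{E}(\underline{P})}(f\vert B)$, $(f,B)\in\mathcal{C}(\mathcal{X})$. Gambles on $\mathcal{X}_i$ are identified with their cylindrical extensions to $\mathcal{X}_1\times\mathcal{X}_2$, events $B\subseteq\mathcal{X}_1$ with $B\times\mathcal{X}_2$ and $B\subseteq\mathcal{X}_2$ with $\mathcal{X}_1\times B$ (so $B_i\cap B_j$ is a rectangle in $\mathcal{X}_1\times\mathcal{X}_2$).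 For coherent sets of desirable gambles $\mathcal{D}_1,\mathcal{D}_2$: $\mathcal{D}_1\otimes\mathcal{D}_2:=\mathcal{E}(\mathcal{A}_{1\to2}\cup\mathcal{A}_{2\to1})$, $\mathcal{A}_{1\to2}:=\{f_2(X_2)\mathbb{I}_{B_1}(X_1)\colon f_2\in\mathcal{D}_2,B_1\in\mathcal{B}_1\cup\{\mathcal{X}_1\}\}$, $\mathcal{A}_{2\to1}:=\{f_1(X_1)\mathbb{I}_{B_2}(X_2)\colon f_1\in\mathcal{D}_1,B_2\in\mathcal{B}_2\cup\{\mathcal{X}_2\}\}$. Then $(\underline{P}_1\otimes\underline{P}_2)(f\vert B):=\underline{P}_{\mathcal{D}}(f\vert B)$ for $(f,B)\in\mathcal{C}(\mathcal{X}_1\times\mathcal{X}_2)$ with $\mathcal{D}=\mathcal{E}(\underline{P}_1)\otimes\mathcal{E}(\underline{P}_2)$. *)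

(* Defs.v *)
From Stdlib Require Import Reals List Classical ClassicalDescription.
From Coquelicot Require Import Rbar Lub.
Open Scope R_scope.

Definition gamble {X : Type} (f : X -> R) : Prop :=
  exists M : R, forall x, Rabs (f x) <= M.

Definition gset (X : Type) := (X -> R) -> Prop.

Definition ind {X : Type} (B : X -> Prop) (x : X) : R :=
  if excluded_middle_informative (B x) then 1 else 0.

Definition Gpos {X : Type} : gset X :=
  fun f => gamble f /\ (forall x, 0 <= f x) /\ exists x, f x <> 0.

Definition posi {X : Type} (A : gset X) : gset X :=
  fun g => exists l : list (R * (X -> R)),
    l <> nil /\
    Forall (fun p => 0 < fst p /\ A (snd p)) l /\
    forall x, g x = fold_right (fun p acc => fst p * snd p x + acc) 0 l.

Definition Eext {X : Type} (A : gset X) : gset X :=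
  posi (fun f => A f \/ Gpos f).

Definition coherent_D {X : Type} (D : gset X) : Prop :=
  (forall f, D f -> gamble f) /\
  (forall f, gamble f -> (forall x, 0 <= f x) -> (exists x, f x <> 0) -> D f) /\
  (forall f lam, D f -> 0 < lam -> D (fun x => lam * f x)) /\
  (forall f g, D f -> D g -> D (fun x => f x + g x)) /\
  (forall f, (forall x, f x <= 0) -> ~ D f).

Definition LP_D {X : Type} (D : gset X) (f : X -> R) (B : X -> Prop) : Rbar :=
  Lub_Rbar (fun mu => D (fun x => (f x - mu) * ind B x)).

Definition domain (X : Type) := (X -> R) -> (X -> Prop) -> Prop.
Definition lprev (X : Type) := (X -> R) -> (X -> Prop) -> Rbar.

Definition in_CX {X : Type} (C : domain X) : Prop :=
  forall f B, C f B -> gamble f /\ exists x, B x.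

Definition coherent_P {X : Type} (C : domain X) (P : lprev X) : Prop :=
  exists D : gset X, coherent_D D /\ forall f B, C f B -> P f B = LP_D D f B.

Definition EP {X : Type} (C : domain X) (P : lprev X) : gset X :=
  Eext (fun g => exists f B mu, C f B /\ Rbar_lt (Finite mu) (P f B) /\
                   forall x, g x = (f x - mu) * ind B x).

Definition natext {X : Type} (C : domain X) (P : lprev X) : lprev X :=
  fun f B => LP_D (EP C P) f B.

Definition prodD {X1 X2 : Type} (Bs1 : (X1 -> Prop) -> Prop) (Bs2 : (X2 -> Prop) -> Prop)
  (D1 : gset X1) (D2 : gset X2) : gset (X1 * X2) :=
  Eext (fun g =>
    (exists f2 B1, D2 f2 /\ (Bs1 B1 \/ forall x, B1 x) /\
        forall z, g z = f2 (snd z) * ind B1 (fst z)) \/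
    (exists f1 B2, D1 f1 /\ (Bs2 B2 \/ forall y, B2 y) /\
        forall z, g z = f1 (fst z) * ind B2 (snd z))).

Definition prodP {X1 X2 : Type} (Bs1 : (X1 -> Prop) -> Prop) (Bs2 : (X2 -> Prop) -> Prop)
  (C1 : domain X1) (P1 : lprev X1) (C2 : domain X2) (P2 : lprev X2) : lprev (X1 * X2) :=
  fun f B => LP_D (prodD Bs1 Bs2 (EP C1 P1) (EP C2 P2)) f B.

(* Main.v *)
Require Import Defs.
From Stdlib Require Import Reals Lra List Classical ClassicalEpsilon ClassicalDescription FunctionalExtensionality PropExtensionality Arith Lia.
From Coquelicot Require Import Rbar Lub.
Require Import Defs.
Import ListNotations.
Open Scope R_scope.

Definition ev {X : Type} (l : list (R * (X -> R))) (x : X) : R :=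
  fold_right (fun p acc => fst p * snd p x + acc) 0 l.

Lemma ev_app {X} (l1 l2 : list (R * (X -> R))) x : ev (l1 ++ l2) x = ev l1 x + ev l2 x.
Proof. induction l1 as [|p l1 IH]; simpl; [ring|]. unfold ev in *; simpl; rewrite IH; ring. Qed.

Lemma ev_scale {X} lam (l : list (R * (X -> R))) x :
  ev (map (fun p => (lam * fst p, snd p)) l) x = lam * ev l x.
Proof. induction l as [|p l IH]; unfold ev in *; simpl; [ring|]. rewrite IH; ring. Qed.

Lemma ev_cons {X} (p : R * (X -> R)) l x : ev (p :: l) x = fst p * snd p x + ev l x.
Proof. reflexivity. Qed.

Lemma ev_nonpos_of {X} (l : list (R * (X -> R))) x :
  Forall (fun p => 0 < fst p /\ snd p x <= 0) l -> ev l x <= 0.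
Proof.
  induction 1 as [|p l [H1 H2] _ IH]; unfold ev in *; simpl; [lra|].
  assert (fst p * snd p x <= 0) by nra. lra.
Qed.

Fixpoint sumn (n : nat) (f : nat -> R) : R :=
  match n with O => 0 | S k => sumn k f + f k end.

Lemma sumn_ext n f g : (forall j, (j < n)%nat -> f j = g j) -> sumn n f = sumn n g.
Proof. induction n; simpl; intros H; [reflexivity|]. rewrite IHn by (intros; apply H; lia). rewrite H by lia; reflexivity. Qed.

Lemma sumn_le n f g : (forall j, (j < n)%nat -> f j <= g j) -> sumn n f <= sumn n g.
Proof. induction n; simpl; intros H; [lra|]. assert (sumn n f <= sumn n g) by (apply IHn; intros; apply H; lia). assert (f n <= g n) by (apply H; lia). lra. Qed.

Lemma sumn_lin n a b f g : sumn n (fun j => a * f j + b * g j) = a * sumn n f + b * sumn n g.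
Proof. induction n; simpl; [ring|]. rewrite IHn; ring. Qed.

Lemma sumn_opp n f : sumn n (fun j => - f j) = - sumn n f.
Proof. induction n; simpl; [ring|]. rewrite IHn; ring. Qed.

Lemma sumn_nonpos n f : (forall j, (j < n)%nat -> f j <= 0) -> sumn n f <= 0.
Proof. induction n; simpl; intros H; [lra|]. assert (sumn n f <= 0) by (apply IHn; intros; apply H; lia). assert (f n <= 0) by (apply H; lia). lra. Qed.

Lemma ev_flat_seq {X} (F : nat -> list (R * (X -> R))) n a :
  ev (flat_map F (seq 0 n)) a = sumn n (fun j => ev (F j) a).
Proof.
  induction n; [reflexivity|]. rewrite seq_S, flat_map_app, ev_app, IHn. simpl.
  rewrite app_nil_r. reflexivity.
Qed.

Lemma flat_map_nil_in {A B} (F : A -> list B) l j : flat_map F l = [] -> In j l -> F j = [].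
Proof.
  induction l as [|a l IH]; simpl; intros H Hj; [destruct Hj|].
  apply app_eq_nil in H. destruct H as [H1 H2]. destruct Hj as [->|Hj]; auto.
Qed.

Lemma fold_Rmax_ge0 l : 0 <= fold_right Rmax 0 l.
Proof. induction l; simpl; [lra|]. eapply Rle_trans; [exact IHl| apply Rmax_r]. Qed.

Lemma fold_Rmax_ge l x : In x l -> x <= fold_right Rmax 0 l.
Proof. induction l; simpl; intros H; [destruct H|]. destruct H as [->|H]; [apply Rmax_l|].
  eapply Rle_trans; [apply IHl; auto| apply Rmax_r]. Qed.

Lemma fold_Rmax_le l B : 0 <= B -> (forall x, In x l -> x <= B) -> fold_right Rmax 0 l <= B.
Proof. induction l; simpl; intros H0 H; [lra|]. apply Rmax_lub; auto. Qed.

Lemma expand {X} (combos : list (list (R * (X -> R)))) (rows : list (X -> R))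
  (wl : list (R * (X -> R))) :
  (forall c, In c combos -> c <> [] /\ Forall (fun p => 0 < fst p /\ In (snd p) rows) c) ->
  Forall (fun p => 0 < fst p /\ In (snd p) (map ev combos)) wl ->
  exists wl0, (wl <> [] -> wl0 <> []) /\ Forall (fun p => 0 < fst p /\ In (snd p) rows) wl0 /\
    forall x, ev wl0 x = ev wl x.
Proof.
  intros Hc. induction 1 as [|[lam r] wl [Hlam Hr] _ IH].
  - exists []. split; [auto|]. split; [constructor|]. reflexivity.
  - destruct IH as [wl0 [_ [Hf He]]]. simpl in Hr, Hlam. apply in_map_iff in Hr. destruct Hr as [c [Hcr Hin]]. subst r.
    destruct (Hc c Hin) as [Hne Hcf].
    exists (map (fun p => (lam * fst p, snd p)) c ++ wl0). split.
    + intros _ H. apply app_eq_nil in H. destruct H as [H _]. apply map_eq_nil in H. auto.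
    + split.
      * apply Forall_app; split; auto. apply Forall_forall. intros q Hq.
        apply in_map_iff in Hq. destruct Hq as [q0 [<- Hq0]]. rewrite Forall_forall in Hcf.
        destruct (Hcf q0 Hq0). simpl. split; auto. apply Rmult_lt_0_compat; auto.
      * intros x. rewrite ev_app, ev_scale, He. reflexivity.
Qed.

Definition FMalt (n : nat) (rows : list (nat -> R)) : Prop :=
  (exists wl, wl <> [] /\ Forall (fun p => 0 < fst p /\ In (snd p) rows) wl /\
     forall j, (j < n)%nat -> ev wl j <= 0)
  \/ (exists u : nat -> R, (forall j, (j < n)%nat -> 0 <= u j) /\
       (exists j, (j < n)%nat /\ 0 < u j) /\
       forall r, In r rows -> 0 <= sumn n (fun j => r j * u j))
  \/ (n = O /\ rows = []).

Lemma FM : forall n rows, FMalt n rows.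
Proof.
  induction n; intros rows.
  - destruct rows as [|r rows]. { right; right; auto. }
    left. exists [(1, r)]. split; [discriminate|]. split.
    + constructor; [simpl; split; [lra|left; reflexivity]|constructor].
    + intros j Hj; lia.
  - set (P := filter (fun r : nat -> R => if Rlt_dec 0 (r n) then true else false) rows).
    set (N := filter (fun r : nat -> R => if Rlt_dec (r n) 0 then true else false) rows).
    set (Z := filter (fun r : nat -> R => if Req_dec_T (r n) 0 then true else false) rows).
    assert (HP : forall r, In r P <-> In r rows /\ 0 < r n).
    { intros r. unfold P. rewrite filter_In. destruct (Rlt_dec 0 (r n)) as [h|h]; split; intros [H1 H2]; split; auto; try discriminate; contradiction. }
    assert (HN : forall r, In r N <-> In r rows /\ r n < 0).
    { intros r. unfold N. rewrite filter_In. destruct (Rlt_dec (r n) 0) as [h|h]; split; intros [H1 H2]; split; auto; try discriminate; contradiction. }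
    assert (HZ : forall r, In r Z <-> In r rows /\ r n = 0).
    { intros r. unfold Z. rewrite filter_In. destruct (Req_dec_T (r n) 0) as [h|h]; split; intros [H1 H2]; split; auto; try discriminate; contradiction. }
    set (cZ := map (fun r => [(1, r)]) Z).
    set (cPN := flat_map (fun p => map (fun q => [(- q n, p); (p n, q)]) N) P).
    set (cN := map (fun q => [(1, q)]) N).
    set (combos := cZ ++ cPN ++ cN).
    assert (Hcomb : forall c, In c combos -> c <> [] /\
               Forall (fun p => 0 < fst p /\ In (snd p) rows) c /\ ev c n <= 0).
    { intros c Hc. unfold combos in Hc. apply in_app_or in Hc. destruct Hc as [Hc|Hc].
      - unfold cZ in Hc. apply in_map_iff in Hc. destruct Hc as [r [<- Hr]]. apply HZ in Hr.
        destruct Hr as [Hr Hr0]. split; [discriminate|]. split.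
        + constructor; [simpl; split; [lra|auto]|constructor].
        + unfold ev; simpl. rewrite Hr0. lra.
      - apply in_app_or in Hc. destruct Hc as [Hc|Hc].
        + unfold cPN in Hc. apply in_flat_map in Hc. destruct Hc as [p [Hp Hc]].
          apply in_map_iff in Hc. destruct Hc as [q [<- Hq]]. apply HP in Hp. apply HN in Hq.
          destruct Hp as [Hp Hp0]; destruct Hq as [Hq Hq0].
          split; [discriminate|]. split.
          * constructor; [simpl; split; [lra|auto]|]. constructor; [simpl; split; [lra|auto]|constructor].
          * unfold ev; simpl. lra.
        + unfold cN in Hc. apply in_map_iff in Hc. destruct Hc as [r [<- Hr]]. apply HN in Hr.
          destruct Hr as [Hr Hr0]. split; [discriminate|]. split.
          * constructor; [simpl; split; [lra|auto]|constructor].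
          * unfold ev; simpl. lra. }
    assert (Hev1 : forall (r : nat -> R) (j : nat), ev [(1, r)] j = r j) by (intros; unfold ev; simpl; ring).
    destruct (IHn (map ev combos)) as [[wl [Hne [Hf Hle]]] | [[u [Hu0 [[j0 [Hj0 Hj0p]] Hu]]] | [Hn0 Hnil]]].
    + destruct (expand combos rows wl) as [wl0 [Hne0 [Hf0 He0]]].
      { intros c Hc. destruct (Hcomb c Hc) as [? [? ?]]. auto. }
      { exact Hf. }
      left. exists wl0. split; [auto|]. split; [auto|]. intros j Hj. rewrite He0.
      destruct (Nat.lt_ge_cases j n) as [Hjn|Hjn]; [apply Hle; auto|].
      assert (j = n) by lia. subst j. apply ev_nonpos_of.
      eapply Forall_impl; [|exact Hf]. simpl. intros [lam r] [Hl Hr]. simpl in *. split; auto.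
      apply in_map_iff in Hr. destruct Hr as [c [<- Hc]]. apply (Hcomb c Hc).
    + set (S := fun r : nat -> R => sumn n (fun j => r j * u j)).
      assert (HS : forall c, In c combos -> 0 <= sumn n (fun j => ev c j * u j)).
      { intros c Hc. apply Hu. apply in_map. auto. }
      set (t := fold_right Rmax 0 (map (fun p : nat -> R => - S p / p n) P)).
      right; left. exists (fun j => if Nat.ltb j n then u j else t). split; [|split].
      * intros j Hj. destruct (Nat.ltb_spec j n); [apply Hu0; auto| apply fold_Rmax_ge0].
      * exists j0. split; [lia|]. destruct (Nat.ltb_spec j0 n); [auto|lia].
      * intros r Hr. simpl.
        rewrite (sumn_ext n _ (fun j => r j * u j)) by (intros j Hj; destruct (Nat.ltb_spec j n); [reflexivity|lia]).
        rewrite Nat.ltb_irrefl. fold (S r).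
        destruct (Rtotal_order (r n) 0) as [Hlt|[Heq|Hgt]].
        -- assert (HrN : In r N) by (apply HN; auto).
           assert (HSr : 0 <= S r).
           { assert (Hc : In [(1, r)] combos).
             { unfold combos. apply in_or_app; right; apply in_or_app; right. unfold cN. apply in_map_iff; exists r; split; auto. }
             specialize (HS _ Hc). unfold S. rewrite (sumn_ext n _ (fun j => ev [(1, r)] j * u j)); auto.
             intros; rewrite Hev1; auto. }
           assert (Ht : t <= S r / (- r n)).
           { apply fold_Rmax_le.
             - apply Rmult_le_pos; auto. left. apply Rinv_0_lt_compat. lra.
             - intros x Hx. apply in_map_iff in Hx. destruct Hx as [p [<- Hp]].
               assert (Hp0 : 0 < p n) by (apply HP in Hp; tauto).
               assert (Hc : In [(- r n, p); (p n, r)] combos).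
               { unfold combos. apply in_or_app; right; apply in_or_app; left. unfold cPN.
                 apply in_flat_map. exists p. split; auto. apply in_map_iff. exists r; auto. }
               specialize (HS _ Hc).
               rewrite (sumn_ext n _ (fun j => (- r n) * (p j * u j) + p n * (r j * u j))) in HS
                 by (intros; unfold ev; simpl; ring).
               rewrite sumn_lin in HS. fold (S p) (S r) in HS.
               set (A := - S p / p n). set (Bv := S r / - r n).
               assert (HA : A * p n = - S p) by (unfold A; field; lra).
               assert (HB : Bv * (- r n) = S r) by (unfold Bv; field; lra).
               destruct (Rle_dec A Bv) as [?|Hn]; auto. exfalso.
               assert (0 < (A - Bv) * (p n * - r n)) by (apply Rmult_lt_0_compat; nra).
               nra. }
           assert (r n * t >= r n * (S r / - r n)) by nra.
           assert (r n * (S r / - r n) = - S r) by (field; lra). lra.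
        -- assert (HrZ : In r Z) by (apply HZ; auto).
           assert (Hc : In [(1, r)] combos).
           { unfold combos. apply in_or_app; left. unfold cZ. apply in_map_iff; exists r; split; auto. }
           specialize (HS _ Hc). rewrite (sumn_ext n _ (fun j => r j * u j)) in HS by (intros; rewrite Hev1; auto).
           fold (S r) in HS. rewrite Heq. lra.
        -- assert (HrP : In r P) by (apply HP; auto).
           assert (- S r / r n <= t) by (apply fold_Rmax_ge; apply in_map_iff; exists r; auto).
           assert (r n * (- S r / r n) <= r n * t) by (apply Rmult_le_compat_l; lra).
           assert (r n * (- S r / r n) = - S r) by (field; lra). lra.
    + subst n. apply map_eq_nil in Hnil. unfold combos in Hnil.
      apply app_eq_nil in Hnil. destruct Hnil as [HcZ Hnil]. apply app_eq_nil in Hnil. destruct Hnil as [_ HcN].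
      unfold cZ in HcZ; unfold cN in HcN. apply map_eq_nil in HcZ. apply map_eq_nil in HcN.
      right; left. exists (fun _ => 1). split; [intros; lra|]. split; [exists O; split; [lia|lra]|].
      intros r Hr. simpl.
      destruct (Rtotal_order (r O) 0) as [Hlt|[Heq|Hgt]].
      * assert (In r N) by (apply HN; auto). rewrite HcN in H. destruct H.
      * assert (In r Z) by (apply HZ; auto). rewrite HcZ in H. destruct H.
      * lra.
Qed.

Definition bid (x : bool) : bool := x.
Definition dec (P : Prop) : bool := if excluded_middle_informative P then true else false.

Definition pat {A B : Type} (t : list (R * (B -> R) * (A -> Prop))) (a : A) : list bool :=
  map (fun p => dec (snd p a)) t.

Fixpoint Gp {A B : Type} (bs : list bool) (t : list (R * (B -> R) * (A -> Prop))) (b : B) : R :=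
  match bs, t with
  | bb :: bs', p :: t' => (if bb then fst (fst p) * snd (fst p) b else 0) + Gp bs' t' b
  | _, _ => 0
  end.

Fixpoint sg {A B : Type} (t : list (R * (B -> R) * (A -> Prop))) (a : A) (b : B) : R :=
  match t with
  | [] => 0
  | p :: t' => fst (fst p) * snd (fst p) b * ind (snd p) a + sg t' a b
  end.

Fixpoint sel {A B : Type} (bs : list bool) (t : list (R * (B -> R) * (A -> Prop))) : list (R * (B -> R)) :=
  match bs, t with
  | bb :: bs', p :: t' => if bb then (fst (fst p), snd (fst p)) :: sel bs' t' else sel bs' t'
  | _, _ => []
  end.

Lemma sg_Gp {A B} (t : list (R * (B -> R) * (A -> Prop))) a b : sg t a b = Gp (pat t a) t b.
Proof.
  induction t as [|p t IH]; simpl; [reflexivity|]. rewrite IH. unfold ind, dec.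
  destruct (excluded_middle_informative (snd p a)); simpl; ring.
Qed.

Lemma ev_sel {A B} bs (t : list (R * (B -> R) * (A -> Prop))) b : ev (sel bs t) b = Gp bs t b.
Proof.
  revert t; induction bs as [|bb bs IH]; intros [|p t]; simpl; try reflexivity.
  destruct bb; [rewrite ev_cons; simpl; rewrite IH; ring| rewrite IH; ring].
Qed.

Lemma in_sel {A B} bs (t : list (R * (B -> R) * (A -> Prop))) q :
  In q (sel bs t) -> exists p, In p t /\ q = (fst (fst p), snd (fst p)).
Proof.
  revert t; induction bs as [|bb bs IH]; intros [|p t]; simpl; try tauto.
  intros H. destruct bb.
  - destruct H as [<-|H]; [exists p; auto|]. destruct (IH t H) as [p' [? ?]]; exists p'; auto.
  - destruct (IH t H) as [p' [? ?]]; exists p'; auto.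
Qed.

Lemma sel_good {A B} (S : (B -> R) -> Prop) bs (t : list (R * (B -> R) * (A -> Prop))) :
  Forall (fun p => 0 < fst (fst p) /\ S (snd (fst p)) /\ exists a, snd p a) t ->
  Forall (fun q => 0 < fst q /\ S (snd q)) (sel bs t).
Proof.
  intros H. rewrite Forall_forall in *. intros q Hq. destruct (in_sel _ _ _ Hq) as [p [Hp ->]].
  destruct (H p Hp) as [? [? _]]. simpl; auto.
Qed.

Lemma sel_ne {A B} bs (t : list (R * (B -> R) * (A -> Prop))) :
  length bs = length t -> existsb bid bs = true -> sel bs t <> [].
Proof.
  revert t; induction bs as [|bb bs IH]; intros [|p t]; simpl; intros Hl He; try discriminate.
  destruct bb; [discriminate|]. apply IH; auto.
Qed.

Lemma Gp_zero {A B} bs (t : list (R * (B -> R) * (A -> Prop))) b :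
  existsb bid bs = false -> Gp bs t b = 0.
Proof.
  revert t; induction bs as [|bb bs IH]; intros [|p t]; simpl; intros He; try reflexivity.
  destruct bb; [discriminate|]. rewrite IH; auto. ring.
Qed.

Lemma length_pat {A B} (t : list (R * (B -> R) * (A -> Prop))) a : length (pat t a) = length t.
Proof. unfold pat. apply length_map. Qed.

Lemma pat_head {A B} (p : R * (B -> R) * (A -> Prop)) t a : snd p a -> existsb bid (pat (p :: t) a) = true.
Proof. intros H. simpl. unfold dec. destruct (excluded_middle_informative (snd p a)); [reflexivity|contradiction]. Qed.

Fixpoint allpat (n : nat) : list (list bool) :=
  match n with
  | O => [[]]
  | S k => map (cons true) (allpat k) ++ map (cons false) (allpat k)
  end.

Lemma In_allpat bs : In bs (allpat (length bs)).
Proof.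
  induction bs as [|b bs IH]; simpl; [left; reflexivity|]. apply in_or_app.
  destruct b; [left|right]; apply in_map; auto.
Qed.

Definition NP {X : Type} (S : gset X) : Prop :=
  forall l : list (R * (X -> R)), l <> [] -> Forall (fun p => 0 < fst p /\ S (snd p)) l ->
    ~ (forall x, ev l x <= 0).

Lemma core {A B : Type} (S1 : gset A) (S2 : gset B) (NP1 : NP S1) (NP2 : NP S2)
  (t1 : list (R * (B -> R) * (A -> Prop))) (t2 : list (R * (A -> R) * (B -> Prop)))
  (H1 : Forall (fun p => 0 < fst (fst p) /\ S2 (snd (fst p)) /\ exists a, snd p a) t1)
  (H2 : Forall (fun p => 0 < fst (fst p) /\ S1 (snd (fst p)) /\ exists b, snd p b) t2)
  (Hle : forall a b, sg t1 a b + sg t2 b a <= 0) : t1 = [] /\ t2 = [].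
Proof.
  assert (Hp : forall a b, Gp (pat t1 a) t1 b + Gp (pat t2 b) t2 a <= 0)
    by (intros; rewrite <- !sg_Gp; auto).
  set (rowpats := filter (fun bs => andb (existsb bid bs) (dec (exists a, pat t1 a = bs))) (allpat (length t1))).
  set (colpats := filter (fun bs => andb (existsb bid bs) (dec (exists b, pat t2 b = bs))) (allpat (length t2))).
  assert (Hrow : forall bs, In bs rowpats <-> existsb bid bs = true /\ exists a, pat t1 a = bs).
  { intros bs. unfold rowpats. rewrite filter_In. split.
    - intros [_ H]. apply andb_prop in H. destruct H as [H H']. unfold dec in H'.
      destruct (excluded_middle_informative _); [auto|discriminate].
    - intros [H [a Ha]]. split.
      + rewrite <- Ha. rewrite <- (length_pat t1 a). apply In_allpat.
      + rewrite H. unfold dec. destruct (excluded_middle_informative _) as [_|n]; [reflexivity|].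
        exfalso; apply n; eauto. }
  assert (Hcol : forall bs, In bs colpats <-> existsb bid bs = true /\ exists b, pat t2 b = bs).
  { intros bs. unfold colpats. rewrite filter_In. split.
    - intros [_ H]. apply andb_prop in H. destruct H as [H H']. unfold dec in H'.
      destruct (excluded_middle_informative _); [auto|discriminate].
    - intros [H [a Ha]]. split.
      + rewrite <- Ha. rewrite <- (length_pat t2 a). apply In_allpat.
      + rewrite H. unfold dec. destruct (excluded_middle_informative _) as [_|n]; [reflexivity|].
        exfalso; apply n; eauto. }
  assert (Hm : forall bs cs, exists mm, (exists a, pat t1 a = bs) -> (exists b, pat t2 b = cs) ->
     (forall b, pat t2 b = cs -> Gp bs t1 b <= mm) /\ (forall a, pat t1 a = bs -> Gp cs t2 a <= - mm)).
  { intros bs cs.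
    destruct (classic ((exists a, pat t1 a = bs) /\ (exists b, pat t2 b = cs))) as [[[a0 Ha0] [b0 Hb0]]|Hn].
    - set (E := fun r => exists b, pat t2 b = cs /\ r = Gp bs t1 b).
      assert (Hb : bound E).
      { exists (- Gp cs t2 a0). intros r [b [Hb ->]]. specialize (Hp a0 b). rewrite Ha0, Hb in Hp. lra. }
      assert (He : exists r, E r) by (exists (Gp bs t1 b0); exists b0; auto).
      destruct (completeness E Hb He) as [mm [Hub Hlub]].
      exists mm. intros _ _. split.
      + intros b Hb'. apply Hub. exists b; auto.
      + intros a Ha. assert (mm <= - Gp cs t2 a); [|lra]. apply Hlub.
        intros r [b [Hb' ->]]. specialize (Hp a b). rewrite Ha, Hb' in Hp. lra.
    - exists 0. intros Ha Hb. exfalso; auto. }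
  set (mf := fun bs cs => proj1_sig (constructive_indefinite_description _ (Hm bs cs))).
  assert (Hmf : forall bs cs, (exists a, pat t1 a = bs) -> (exists b, pat t2 b = cs) ->
     (forall b, pat t2 b = cs -> Gp bs t1 b <= mf bs cs) /\ (forall a, pat t1 a = bs -> Gp cs t2 a <= - mf bs cs)).
  { intros bs cs Ha Hb. unfold mf. destruct (constructive_indefinite_description _ _) as [mm Hmm].
    simpl. apply Hmm; auto. }
  clearbody mf.
  set (n := length colpats).
  set (rowfun := fun bs => fun j => mf bs (nth j colpats [])).
  assert (Hcolreal : forall j, (j < n)%nat -> existsb bid (nth j colpats []) = true /\
                        exists b, pat t2 b = nth j colpats []).
  { intros j Hj. apply Hcol. apply nth_In. auto. }
  destruct (FM n (map rowfun rowpats)) as [[wl [Hne [Hf Hle']]] | [[u [Hu0 [[j0 [Hj0 Hj0p]] Hu]]] | [Hn0 Hnil]]].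
  - exfalso.
    assert (Hind : forall wl, Forall (fun p => 0 < fst p /\ In (snd p) (map rowfun rowpats)) wl ->
       exists L, Forall (fun q => 0 < fst q /\ S2 (snd q)) L /\ (wl <> [] -> L <> []) /\
         forall b, (forall j, (j < n)%nat -> nth j colpats [] = pat t2 b -> ev L b <= ev wl j) /\
                   (existsb bid (pat t2 b) = false -> ev L b <= 0)).
    { clear Hf Hne Hle' wl. induction wl as [|[lam r] wl IH]; intros HF.
      - exists []. split; [constructor|]. split; [congruence|]. intros b; split; intros; unfold ev; simpl; lra.
      - inversion HF as [|? ? [Hlam Hr] HF']; subst. simpl in Hlam, Hr.
        destruct (IH HF') as [L [HL [_ HLb]]].
        apply in_map_iff in Hr. destruct Hr as [bs [Hbs Hin]]. subst r.
        apply Hrow in Hin. destruct Hin as [Hnz [a0 Ha0]].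
        exists (map (fun q => (lam * fst q, snd q)) (sel bs t1) ++ L). split; [|split].
        + apply Forall_app; split; [|auto]. apply Forall_forall. intros q Hq.
          apply in_map_iff in Hq. destruct Hq as [q0 [<- Hq0]].
          pose proof (sel_good S2 bs t1 H1) as Hs. rewrite Forall_forall in Hs.
          destruct (Hs q0 Hq0). simpl. split; auto. apply Rmult_lt_0_compat; auto.
        + intros _ Happ. apply app_eq_nil in Happ. destruct Happ as [Hs _]. apply map_eq_nil in Hs.
          revert Hs. apply sel_ne; auto. rewrite <- Ha0; apply length_pat.
        + intros b. rewrite ev_app, ev_scale, ev_sel. destruct (HLb b) as [HL1 HL2]. split.
          * intros j Hj Hnth. rewrite ev_cons. simpl. unfold rowfun. rewrite Hnth.
            destruct (Hmf bs (pat t2 b) (ex_intro _ a0 Ha0) (ex_intro _ b eq_refl)) as [Hm1 _].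
            specialize (Hm1 b eq_refl). specialize (HL1 j Hj Hnth).
            assert (lam * Gp bs t1 b <= lam * mf bs (pat t2 b)) by (apply Rmult_le_compat_l; lra). lra.
          * intros Hz. specialize (Hp a0 b). rewrite Ha0, (Gp_zero _ _ _ Hz) in Hp.
            specialize (HL2 Hz). nra. }
    destruct (Hind wl Hf) as [L [HL [HLne HLb]]].
    apply (NP2 L (HLne Hne) HL). intros b.
    destruct (existsb bid (pat t2 b)) eqn:Ez.
    + assert (Hin : In (pat t2 b) colpats) by (apply Hcol; eauto).
      destruct (In_nth colpats (pat t2 b) [] Hin) as [j [Hj Hnth]].
      destruct (HLb b) as [H _]. specialize (H j Hj Hnth). specialize (Hle' j Hj). lra.
    + apply (proj2 (HLb b)); auto.
  - exfalso.
    set (F := fun j => if Rlt_dec 0 (u j) then map (fun q => (u j * fst q, snd q)) (sel (nth j colpats []) t2) else []).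
    set (L := flat_map F (seq 0 n)).
    assert (HevL : forall a, ev L a = sumn n (fun j => u j * Gp (nth j colpats []) t2 a)).
    { intros a. unfold L. rewrite ev_flat_seq. apply sumn_ext. intros j Hj. unfold F.
      destruct (Rlt_dec 0 (u j)). { rewrite ev_scale, ev_sel; auto. }
      specialize (Hu0 j Hj). assert (u j = 0) by lra. rewrite H. unfold ev; simpl; ring. }
    apply (NP1 L).
    + intro HL0. assert (Hin : In j0 (seq 0 n)) by (apply in_seq; lia).
      pose proof (flat_map_nil_in F _ _ HL0 Hin) as HF. unfold F in HF.
      destruct (Rlt_dec 0 (u j0)); [|lra]. apply map_eq_nil in HF. revert HF.
      destruct (Hcolreal j0 Hj0) as [Hz [b Hb]]. apply sel_ne; auto.
      rewrite <- Hb. apply length_pat.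
    + apply Forall_forall. intros q Hq. unfold L in Hq. apply in_flat_map in Hq.
      destruct Hq as [j [_ Hq]]. unfold F in Hq. destruct (Rlt_dec 0 (u j)); [|destruct Hq].
      apply in_map_iff in Hq. destruct Hq as [q0 [<- Hq0]].
      pose proof (sel_good S1 (nth j colpats []) t2 H2) as Hs. rewrite Forall_forall in Hs.
      destruct (Hs q0 Hq0). simpl. split; auto. apply Rmult_lt_0_compat; auto.
    + intros a. rewrite HevL.
      destruct (existsb bid (pat t1 a)) eqn:Ez.
      * assert (Hin : In (pat t1 a) rowpats) by (apply Hrow; eauto).
        assert (Hin' : In (rowfun (pat t1 a)) (map rowfun rowpats)) by (apply in_map; auto).
        specialize (Hu _ Hin').
        assert (sumn n (fun j => u j * Gp (nth j colpats []) t2 a) <= sumn n (fun j => - (rowfun (pat t1 a) j * u j))).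
        { apply sumn_le. intros j Hj. unfold rowfun.
          destruct (Hcolreal j Hj) as [_ Hbr].
          destruct (Hmf (pat t1 a) (nth j colpats []) (ex_intro _ a eq_refl) Hbr) as [_ Hm2].
          specialize (Hm2 a eq_refl). specialize (Hu0 j Hj). nra. }
        rewrite sumn_opp in H. lra.
      * apply sumn_nonpos. intros j Hj. destruct (Hcolreal j Hj) as [_ [b Hb]].
        specialize (Hp a b). rewrite (Gp_zero _ _ _ Ez), Hb in Hp. specialize (Hu0 j Hj). nra.
  - split.
    + destruct t1 as [|p t1']; [reflexivity|exfalso]. inversion H1 as [|? ? [_ [_ [a Ha]]] _]; subst.
      assert (Hin : In (pat (p :: t1') a) rowpats) by (apply Hrow; split; [apply pat_head; auto| eauto]).
      apply map_eq_nil in Hnil. rewrite Hnil in Hin. destruct Hin.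
    + destruct t2 as [|p t2']; [reflexivity|exfalso]. inversion H2 as [|? ? [_ [_ [b Hb]]] _]; subst.
      assert (Hin : In (pat (p :: t2') b) colpats) by (apply Hcol; split; [apply pat_head; auto| eauto]).
      unfold n in Hn0. apply length_zero_iff_nil in Hn0. rewrite Hn0 in Hin. destruct Hin.
Qed.

Definition cc {X : Type} (D : gset X) : Prop :=
  (forall f, D f -> gamble f) /\
  (forall f, Gpos f -> D f) /\
  (forall f lam, D f -> 0 < lam -> D (fun x => lam * f x)) /\
  (forall f g, D f -> D g -> D (fun x => f x + g x)) /\
  (forall f g, D f -> (forall x, g x = f x) -> D g) /\
  (forall f, (forall x, f x <= 0) -> ~ D f).

Lemma gamble_ext {X} (f g : X -> R) : gamble f -> (forall x, g x = f x) -> gamble g.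
Proof. intros [M HM] H. exists M. intros x. rewrite H. auto. Qed.

Lemma gamble_lin {X} (f g : X -> R) a b : gamble f -> gamble g -> gamble (fun x => a * f x + b * g x).
Proof.
  intros [M1 H1] [M2 H2]. exists (Rabs a * M1 + Rabs b * M2). intros x.
  eapply Rle_trans; [apply Rabs_triang|]. rewrite !Rabs_mult.
  apply Rplus_le_compat; apply Rmult_le_compat_l; auto; apply Rabs_pos.
Qed.

Lemma gamble_const {X} (c : R) : @gamble X (fun _ => c).
Proof. exists (Rabs c). intros; lra. Qed.

Lemma ind_bounds {X} (B : X -> Prop) x : 0 <= ind B x <= 1.
Proof. unfold ind. destruct (excluded_middle_informative (B x)); lra. Qed.

Lemma ind_true {X} (B : X -> Prop) x : B x -> ind B x = 1.
Proof. unfold ind. destruct (excluded_middle_informative (B x)); [auto|contradiction]. Qed.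

Lemma gamble_mul_ind {X} (f : X -> R) (B : X -> Prop) : gamble f -> gamble (fun x => f x * ind B x).
Proof.
  intros [M HM]. exists M. intros x. rewrite Rabs_mult.
  pose proof (ind_bounds B x). rewrite (Rabs_right (ind B x)) by lra.
  pose proof (Rabs_pos (f x)). specialize (HM x). nra.
Qed.

Lemma gamble_cond {X} (f : X -> R) (B : X -> Prop) mu : gamble f -> gamble (fun x => (f x - mu) * ind B x).
Proof.
  intros Hf. apply gamble_mul_ind. eapply gamble_ext.
  - apply (gamble_lin f (fun _ => 1) 1 (- mu)); [auto| apply gamble_const].
  - intros; simpl; ring.
Qed.

Lemma ind_conj {X1 X2} (B1 : X1 -> Prop) (B2 : X2 -> Prop) z :
  ind (fun z => B1 (fst z) /\ B2 (snd z)) z = ind B1 (fst z) * ind B2 (snd z).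
Proof.
  unfold ind. destruct (excluded_middle_informative (B1 (fst z) /\ B2 (snd z)));
  destruct (excluded_middle_informative (B1 (fst z)));
  destruct (excluded_middle_informative (B2 (snd z))); try tauto; ring.
Qed.

Lemma gamble_ev {X} (l : list (R * (X -> R))) : Forall (fun p => gamble (snd p)) l -> gamble (ev l).
Proof.
  induction 1 as [|p l Hp _ IH].
  - exists 0. intros. unfold ev; simpl. rewrite Rabs_R0. lra.
  - eapply gamble_ext; [apply (gamble_lin (snd p) (ev l) (fst p) 1); auto|]. intros; rewrite ev_cons; ring.
Qed.

Lemma ev_closed {X} (D : gset X)
  (Hs : forall f lam, D f -> 0 < lam -> D (fun x => lam * f x))
  (Ha : forall f g, D f -> D g -> D (fun x => f x + g x))
  (He : forall f g, D f -> (forall x, g x = f x) -> D g) l :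
  l <> [] -> Forall (fun p => 0 < fst p /\ D (snd p)) l -> D (ev l).
Proof.
  intros Hne HF. induction HF as [|p l [H1 H2] HF IH]; [congruence|].
  destruct l as [|q l].
  - eapply He; [apply (Hs _ _ H2 H1)|]. intros; unfold ev; simpl; ring.
  - eapply He; [apply (Ha _ _ (Hs _ _ H2 H1) (IH ltac:(discriminate)))|]. intros; rewrite ev_cons; reflexivity.
Qed.

Lemma Eext_props {X} (A : gset X) (HA : forall f, A f -> gamble f) :
  (forall f, Eext A f -> gamble f) /\
  (forall f, Gpos f -> Eext A f) /\
  (forall f lam, Eext A f -> 0 < lam -> Eext A (fun x => lam * f x)) /\
  (forall f g, Eext A f -> Eext A g -> Eext A (fun x => f x + g x)) /\
  (forall f g, Eext A f -> (forall x, g x = f x) -> Eext A g).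
Proof.
  split; [|split; [|split; [|split]]].
  - intros f [l [_ [HF Heq]]]. eapply gamble_ext; [apply (gamble_ev l)|exact Heq].
    eapply Forall_impl; [|exact HF]. intros p [_ [H|H]]; [auto| destruct H; auto].
  - intros f Hf. exists [(1, f)]. split; [discriminate|]. split.
    + constructor; [simpl; split; [lra| right; auto]|constructor].
    + intros; simpl; ring.
  - intros f lam [l [Hne [HF Heq]]] Hlam. exists (map (fun p => (lam * fst p, snd p)) l). split; [|split].
    + intro H; apply map_eq_nil in H; auto.
    + apply Forall_forall. intros q Hq. apply in_map_iff in Hq. destruct Hq as [q0 [<- Hq0]].
      rewrite Forall_forall in HF. destruct (HF q0 Hq0). simpl. split; auto. apply Rmult_lt_0_compat; auto.
    + intros x. change (lam * f x = ev (map (fun p => (lam * fst p, snd p)) l) x). rewrite ev_scale.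
      rewrite Heq. reflexivity.
  - intros f g [l1 [Hne1 [HF1 Heq1]]] [l2 [Hne2 [HF2 Heq2]]]. exists (l1 ++ l2). split; [|split].
    + intro H; apply app_eq_nil in H; destruct H; auto.
    + apply Forall_app; auto.
    + intros x. change (f x + g x = ev (l1 ++ l2) x). rewrite ev_app, Heq1, Heq2. reflexivity.
  - intros f g [l [Hne [HF Heq]]] H. exists l. split; [auto|]. split; [auto|]. intros x. rewrite H. apply Heq.
Qed.

Lemma Eext_ext {X} (A : gset X) f g : Eext A f -> (forall x, g x = f x) -> Eext A g.
Proof. intros [l [Hne [HF Heq]]] H. exists l. split; [auto|]. split; [auto|]. intros x. rewrite H. apply Heq. Qed.

Lemma EP_cc {X} (C : domain X) (P : lprev X) : in_CX C -> coherent_P C P -> cc (EP C P).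
Proof.
  intros HC [D0 [HD0 HPD]].
  set (gen := fun g : X -> R => exists f B mu, C f B /\ Rbar_lt (Finite mu) (P f B) /\
                   forall x, g x = (f x - mu) * ind B x).
  assert (HA : forall f, gen f -> gamble f).
  { intros g [f [B [mu [HCf [_ Heq]]]]]. eapply gamble_ext; [|exact Heq].
    apply gamble_cond. apply (HC f B HCf). }
  destruct (Eext_props gen HA) as [P1 [P2 [P3 [P4 P5]]]].
  unfold cc, EP. fold gen. split; [auto|split; [auto|split; [auto|split; [auto|split; [auto|]]]]].
  destruct HD0 as [Dg [Dpos [Dsc [Dsum Dnp]]]].
  assert (Dext : forall f g, D0 f -> (forall x, g x = f x) -> D0 g).
  { intros f g Hf H. replace g with f; auto. apply functional_extensionality; intros; rewrite H; auto. }
  assert (Hgen : forall g, gen g \/ Gpos g -> D0 g).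
  { intros g [[f [B [mu [HCf [Hlt Heq]]]]]|[Hg1 [Hg2 [x Hx]]]]; [|apply Dpos; eauto].
    destruct (HC f B HCf) as [Hf [xb HxB]].
    rewrite (HPD f B HCf) in Hlt. unfold LP_D in Hlt.
    set (E := fun mu0 => D0 (fun x => (f x - mu0) * ind B x)) in Hlt.
    assert (Hex : exists mu', mu < mu' /\ E mu').
    { apply NNPP. intro Hno.
      assert (Hub : is_ub_Rbar E mu).
      { intros mu0 Hmu0. simpl. destruct (Rle_dec mu0 mu) as [?|Hn]; auto.
        exfalso; apply Hno; exists mu0; split; [lra|auto]. }
      destruct (Lub_Rbar_correct E) as [_ Hl]. specialize (Hl _ Hub).
      exact (Rbar_lt_not_le _ _ Hlt Hl). }
    destruct Hex as [mu' [Hmu' HE]].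
    assert (Hpos : D0 (fun x => (mu' - mu) * ind B x)).
    { apply Dpos.
      - eapply gamble_ext; [apply (gamble_mul_ind (fun _ => mu' - mu) B (gamble_const _))|]. reflexivity.
      - intros x. pose proof (ind_bounds B x). nra.
      - exists xb. rewrite ind_true by auto. lra. }
    eapply Dext; [apply (Dsum _ _ HE Hpos)|]. intros x. rewrite Heq. ring. }
  intros f Hnp Hf. destruct Hf as [l [Hne [HF Heq]]].
  assert (HD : D0 (ev l)).
  { apply ev_closed; [exact Dsc|exact Dsum|exact Dext|exact Hne|]. eapply Forall_impl; [|exact HF].
    intros p [H1 H2]; split; auto. }
  apply (Dnp (ev l)); [intros x; specialize (Heq x); unfold ev; rewrite <- Heq; auto|auto].
Qed.

Lemma cc_NP {X} (D : gset X) : cc D -> NP D.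
Proof.
  intros [Hg [Hpos [Hs [Ha [He Hnp]]]]] l Hne HF Hle.
  apply (Hnp (ev l) Hle). apply ev_closed; auto.
Qed.

Lemma NP_minus {X} (D : gset X) (h : X -> R) : cc D -> gamble h -> ~ D h -> (exists x, h x <> 0) ->
  NP (fun f => D f \/ forall x, f x = - h x).
Proof.
  intros HD Hh HnD [x0 Hx0] l Hne HF Hle.
  pose proof HD as [Hg [Hpos [Hs [Ha [He Hnp]]]]].
  assert (Hdec : forall l : list (R * (X -> R)), Forall (fun p => 0 < fst p /\ (D (snd p) \/ forall x, snd p x = - h x)) l ->
     exists d c, (D d \/ forall x, d x = 0) /\ 0 <= c /\ (l <> [] -> D d \/ 0 < c) /\
       forall x, ev l x = d x - c * h x).
  { clear Hne HF Hle l. induction 1 as [|[lam f] l [Hlam Hf] _ IH].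
    - exists (fun _ => 0), 0. split; [right; auto|]. split; [lra|]. split; [congruence|].
      intros; unfold ev; simpl; ring.
    - simpl in Hlam, Hf. destruct IH as [d [c [Hd [Hc [_ Heq]]]]]. destruct Hf as [Hf|Hf].
      + exists (fun x => lam * f x + d x), c. split; [left|]; [|split; [auto|split]].
        * destruct Hd as [Hd|Hd]; [apply Ha; auto|]. eapply He; [apply (Hs f lam Hf Hlam)|]. intros; rewrite Hd; ring.
        * intros _. left. destruct Hd as [Hd|Hd]; [apply Ha; auto|]. eapply He; [apply (Hs f lam Hf Hlam)|]. intros; rewrite Hd; ring.
        * intros x. rewrite ev_cons, Heq. simpl. ring.
      + exists d, (c + lam). split; [auto|]. split; [lra|]. split; [intros; right; lra|].
        intros x. rewrite ev_cons, Heq. simpl. rewrite Hf. ring. }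
  destruct (Hdec l HF) as [d [c [Hd [Hc [Hdc Heq]]]]].
  assert (Hdg : gamble d) by (destruct Hd as [Hd|Hd]; [auto| eapply gamble_ext; [apply (gamble_const 0)|auto]]).
  destruct (Rle_lt_or_eq_dec 0 c Hc) as [Hcp|Hc0].
  - apply HnD.
    assert (Hch : D (fun x => c * h x)).
    { set (q := fun x => c * h x - d x).
      assert (Hq0 : forall x, 0 <= q x) by (intros x; unfold q; specialize (Hle x); rewrite Heq in Hle; lra).
      destruct (classic (exists x, q x <> 0)) as [Hqn|Hqz].
      - assert (Hq : Gpos q).
        { split; [|split; auto]. unfold q. eapply gamble_ext; [apply (gamble_lin h d c (-1)); auto|]. intros; cbv beta; ring. }
        destruct Hd as [Hd|Hd].
        + eapply He; [apply (Ha _ _ Hd (Hpos _ Hq))|]. intros; unfold q; cbv beta; ring.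
        + eapply He; [apply (Hpos _ Hq)|]. intros; unfold q; cbv beta; rewrite Hd; ring.
      - assert (Hqz' : forall x, q x = 0) by (intros x; apply NNPP; intro; apply Hqz; eauto).
        destruct Hd as [Hd|Hd].
        + eapply He; [exact Hd|]. intros x; specialize (Hqz' x); unfold q in Hqz'; lra.
        + exfalso. specialize (Hqz' x0). unfold q in Hqz'. rewrite Hd in Hqz'.
          apply Hx0. apply (Rmult_eq_reg_l c); [lra|lra]. }
    eapply He; [apply (Hs _ (/ c) Hch); apply Rinv_0_lt_compat; auto|]. intros; cbv beta; field; lra.
  - subst c. destruct (Hdc Hne) as [Hd'|Hc']; [|lra].
    apply (Hnp d); [|exact Hd']. intros x; specialize (Hle x); rewrite Heq in Hle; lra.
Qed.

Lemma Gpos_list {X} (pl : list (R * (X -> R))) :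
  Forall (fun q => 0 < fst q /\ Gpos (snd q)) pl ->
  (forall z, 0 <= ev pl z) /\ (pl <> [] -> exists z, 0 < ev pl z).
Proof.
  induction 1 as [|[lam f] pl [Hlam [Hg [Hn [z0 Hz0]]]] _ [IH1 IH2]].
  - split; [intros; unfold ev; simpl; lra| congruence].
  - cbn [fst snd] in *. split.
    + intros z. rewrite ev_cons. simpl. specialize (Hn z). specialize (IH1 z). nra.
    + intros _. exists z0. rewrite ev_cons. simpl. specialize (Hn z0). specialize (IH1 z0).
      assert (0 < f z0) by (destruct Hn; [auto| congruence]). nra.
Qed.

Lemma extract {X1 X2} (x1 : X1) (x2 : X2) (Bs1 : (X1 -> Prop) -> Prop) (Bs2 : (X2 -> Prop) -> Prop)
  (HB1 : forall B, Bs1 B -> exists x, B x) (HB2 : forall B, Bs2 B -> exists y, B y)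
  (D1 : gset X1) (D2 : gset X2) g :
  prodD Bs1 Bs2 D1 D2 g ->
  exists (t1 : list (R * (X2 -> R) * (X1 -> Prop))) (t2 : list (R * (X1 -> R) * (X2 -> Prop)))
         (pl : list (R * (X1 * X2 -> R))),
    Forall (fun p => 0 < fst (fst p) /\ D2 (snd (fst p)) /\ exists a, snd p a) t1 /\
    Forall (fun p => 0 < fst (fst p) /\ D1 (snd (fst p)) /\ exists b, snd p b) t2 /\
    Forall (fun q => 0 < fst q /\ Gpos (snd q)) pl /\
    (t1 = [] -> t2 = [] -> pl <> []) /\
    forall z, g z = sg t1 (fst z) (snd z) + sg t2 (snd z) (fst z) + ev pl z.
Proof.
  intros [l [Hne [HF Heq]]].
  assert (Hm : exists (t1 : list (R * (X2 -> R) * (X1 -> Prop))) (t2 : list (R * (X1 -> R) * (X2 -> Prop)))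
         (pl : list (R * (X1 * X2 -> R))),
    Forall (fun p => 0 < fst (fst p) /\ D2 (snd (fst p)) /\ exists a, snd p a) t1 /\
    Forall (fun p => 0 < fst (fst p) /\ D1 (snd (fst p)) /\ exists b, snd p b) t2 /\
    Forall (fun q => 0 < fst q /\ Gpos (snd q)) pl /\
    (l <> [] -> t1 = [] -> t2 = [] -> pl <> []) /\
    forall z, ev l z = sg t1 (fst z) (snd z) + sg t2 (snd z) (fst z) + ev pl z).
  { clear Hne Heq. induction HF as [|[lam phi] l [Hlam Hphi] HF IH].
    - exists [], [], []. split; [constructor|]. split; [constructor|]. split; [constructor|].
      split; [congruence|]. intros; unfold ev; simpl; ring.
    - simpl in Hlam, Hphi. destruct IH as [t1 [t2 [pl [H1 [H2 [H3 [_ He]]]]]]].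
      destruct Hphi as [[[f2 [B1 [Hf2 [HB Hphi]]]]|[f1 [B2 [Hf1 [HB Hphi]]]]]|Hg].
      + exists ((lam, f2, B1) :: t1), t2, pl. split; [|split; [auto|split; [auto|split]]].
        * constructor; [|auto]. simpl. split; [auto|split; [auto|]].
          destruct HB as [HB|HB]; [apply HB1; auto| exists x1; auto].
        * intros _ Hc; discriminate.
        * intros z. rewrite ev_cons, He, Hphi. simpl. ring.
      + exists t1, ((lam, f1, B2) :: t2), pl. split; [auto|split; [|split; [auto|split]]].
        * constructor; [|auto]. simpl. split; [auto|split; [auto|]].
          destruct HB as [HB|HB]; [apply HB2; auto| exists x2; auto].
        * intros _ _ Hc; discriminate.
        * intros z. rewrite ev_cons, He, Hphi. simpl. ring.
      + exists t1, t2, ((lam, phi) :: pl). split; [auto|split; [auto|split; [|split]]].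
        * constructor; auto.
        * intros _ _ _; discriminate.
        * intros z. rewrite ev_cons, He, ev_cons. simpl. ring. }
  destruct Hm as [t1 [t2 [pl [H1 [H2 [H3 [H4 H5]]]]]]].
  exists t1, t2, pl. split; [auto|split; [auto|split; [auto|split]]]; auto.
  intros z. rewrite <- H5. apply Heq.
Qed.

Lemma marg {X1 X2} (x1 : X1) (x2 : X2) (Bs1 : (X1 -> Prop) -> Prop) (Bs2 : (X2 -> Prop) -> Prop)
  (HB1 : forall B, Bs1 B -> exists x, B x) (HB2 : forall B, Bs2 B -> exists y, B y)
  (D1 : gset X1) (D2 : gset X2) (cc1 : cc D1) (cc2 : cc D2) (h : X1 -> R) (E : X2 -> Prop) :
  gamble h -> (Bs2 E \/ forall y, E y) ->
  (prodD Bs1 Bs2 D1 D2 (fun z => h (fst z) * ind E (snd z)) <-> D1 h).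
Proof.
  intros Hh HE. split.
  - intros Hp. apply NNPP; intro HnD.
    destruct (extract x1 x2 Bs1 Bs2 HB1 HB2 D1 D2 _ Hp) as [t1 [t2 [pl [Ht1 [Ht2 [Hpl [Hne Heq]]]]]]].
    destruct (Gpos_list pl Hpl) as [Hpl0 Hplp].
    assert (HEne : exists y, E y) by (destruct HE as [HE|HE]; [apply HB2; auto| exists x2; auto]).
    destruct (classic (exists x, h x <> 0)) as [Hhn|Hh0].
    + set (t2' := (1, (fun x => - h x), E) :: t2).
      destruct (core (fun f => D1 f \/ forall x, f x = - h x) D2 (NP_minus D1 h cc1 Hh HnD Hhn)
                  (cc_NP D2 cc2) t1 t2') as [_ Ht2'].
      * exact Ht1.
      * constructor.
        -- simpl. split; [lra|split; [right; intros; reflexivity| exact HEne]].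
        -- eapply Forall_impl; [|exact Ht2]. intros p [? [? ?]]; split; auto.
      * intros a b. specialize (Heq (a, b)). simpl in Heq. specialize (Hpl0 (a, b)).
        assert (Hs : sg t2' b a = - (h a * ind E b) + sg t2 b a) by (unfold t2'; simpl; ring).
        rewrite Hs. lra.
      * discriminate Ht2'.
    + assert (Hz : forall x, h x = 0) by (intros x; apply NNPP; intro; apply Hh0; eauto).
      destruct (core D1 D2 (cc_NP D1 cc1) (cc_NP D2 cc2) t1 t2 Ht1 Ht2) as [E1 E2].
      * intros a b. specialize (Heq (a, b)). simpl in Heq. specialize (Hpl0 (a, b)).
        rewrite Hz in Heq. lra.
      * destruct (Hplp (Hne E1 E2)) as [z Hzp]. specialize (Heq z). rewrite Hz, E1, E2 in Heq.
        simpl in Heq. lra.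
  - intros HD. exists [(1, fun z => h (fst z) * ind E (snd z))]. split; [discriminate|]. split.
    + constructor; [|constructor]. simpl. split; [lra|]. left; right. exists h, E. split; [auto|split; [auto|]].
      intros; reflexivity.
    + intros z; simpl; ring.
Qed.

Lemma prodD_swap {X1 X2} (Bs1 : (X1 -> Prop) -> Prop) (Bs2 : (X2 -> Prop) -> Prop)
  (D1 : gset X1) (D2 : gset X2) g :
  prodD Bs1 Bs2 D1 D2 g -> prodD Bs2 Bs1 D2 D1 (fun z => g (snd z, fst z)).
Proof.
  intros [l [Hne [HF Heq]]].
  exists (map (fun p => (fst p, fun z : X2 * X1 => snd p (snd z, fst z))) l). split; [|split].
  - intro H; apply map_eq_nil in H; auto.
  - apply Forall_forall. intros q Hq. apply in_map_iff in Hq. destruct Hq as [q0 [<- Hq0]].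
    rewrite Forall_forall in HF. destruct (HF q0 Hq0) as [Hl Hq]. simpl. split; [auto|].
    destruct Hq as [[[f2 [B1 [Hd [HB Hph]]]]|[f1 [B2 [Hd [HB Hph]]]]]|[[M HM] [Hn [z Hz]]]].
    + left; right. exists f2, B1. split; [auto|split; [auto|]]. intros z; rewrite Hph; reflexivity.
    + left; left. exists f1, B2. split; [auto|split; [auto|]]. intros z; rewrite Hph; reflexivity.
    + right. split; [exists M; intros; apply HM|split; [intros; apply Hn|]].
      exists (snd z, fst z). destruct z; simpl; auto.
  - intros z. rewrite Heq. clear. induction l as [|p l IH]; simpl; [reflexivity|]. rewrite IH. reflexivity.
Qed.

Lemma prodD_swap_iff {X1 X2} (Bs1 : (X1 -> Prop) -> Prop) (Bs2 : (X2 -> Prop) -> Prop)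
  (D1 : gset X1) (D2 : gset X2) g :
  prodD Bs1 Bs2 D1 D2 g <-> prodD Bs2 Bs1 D2 D1 (fun z => g (snd z, fst z)).
Proof.
  split; [apply prodD_swap|]. intros H. pose proof (prodD_swap _ _ _ _ _ H) as H'.
  unfold prodD in *. eapply Eext_ext; [exact H'|]. intros [a b]; reflexivity.
Qed.

Lemma prodD_ext {X1 X2} (Bs1 : (X1 -> Prop) -> Prop) (Bs2 : (X2 -> Prop) -> Prop)
  (D1 : gset X1) (D2 : gset X2) f g :
  prodD Bs1 Bs2 D1 D2 f -> (forall z, g z = f z) -> prodD Bs1 Bs2 D1 D2 g.
Proof. unfold prodD. apply Eext_ext. Qed.

Lemma ind_T {X} (y : X) : ind (fun _ => True) y = 1.
Proof. apply ind_true. exact I. Qed.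
Lemma ind_fst {X1 X2} (B : X1 -> Prop) (z : X1 * X2) : ind (fun z => B (fst z)) z = ind B (fst z).
Proof. reflexivity. Qed.
Lemma ind_snd {X1 X2} (B : X2 -> Prop) (z : X1 * X2) : ind (fun z => B (snd z)) z = ind B (snd z).
Proof. reflexivity. Qed.

Theorem proposition43
  (X1 X2 : Type) (x1 : X1) (x2 : X2)
  (Bs1 : (X1 -> Prop) -> Prop) (Bs2 : (X2 -> Prop) -> Prop)
  (HB1 : forall B, Bs1 B -> exists x, B x)
  (HB2 : forall B, Bs2 B -> exists y, B y)
  (C1 : domain X1) (P1 : lprev X1) (C2 : domain X2) (P2 : lprev X2)
  (HC1 : in_CX C1) (HC2 : in_CX C2)
  (HP1 : coherent_P C1 P1) (HP2 : coherent_P C2 P2) :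
  (* case i = 1, j = 2 *)
  (forall (f1 : X1 -> R) (B1 : X1 -> Prop) (B2 : X2 -> Prop),
     gamble f1 -> (exists x, B1 x) -> Bs2 B2 ->
     prodP Bs1 Bs2 C1 P1 C2 P2 (fun z => f1 (fst z)) (fun z => B1 (fst z) /\ B2 (snd z))
       = prodP Bs1 Bs2 C1 P1 C2 P2 (fun z => f1 (fst z)) (fun z => B1 (fst z)) /\
     prodP Bs1 Bs2 C1 P1 C2 P2 (fun z => f1 (fst z)) (fun z => B1 (fst z))
       = natext C1 P1 f1 B1) /\
  (* case i = 2, j = 1 *)
  (forall (f2 : X2 -> R) (B2 : X2 -> Prop) (B1 : X1 -> Prop),
     gamble f2 -> (exists y, B2 y) -> Bs1 B1 ->
     prodP Bs1 Bs2 C1 P1 C2 P2 (fun z => f2 (snd z)) (fun z => B1 (fst z) /\ B2 (snd z))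
       = prodP Bs1 Bs2 C1 P1 C2 P2 (fun z => f2 (snd z)) (fun z => B2 (snd z)) /\
     prodP Bs1 Bs2 C1 P1 C2 P2 (fun z => f2 (snd z)) (fun z => B2 (snd z))
       = natext C2 P2 f2 B2).
Proof.
  assert (cc1 : cc (EP C1 P1)) by (apply EP_cc; auto).
  assert (cc2 : cc (EP C2 P2)) by (apply EP_cc; auto).
  split.
  - intros f1 B1 B2 Hf1 _ HB2in.
    assert (E1 : forall mu, prodD Bs1 Bs2 (EP C1 P1) (EP C2 P2)
                 (fun x => (f1 (fst x) - mu) * ind (fun z => B1 (fst z) /\ B2 (snd z)) x)
               <-> EP C1 P1 (fun x => (f1 x - mu) * ind B1 x)).
    { intros mu. rewrite <- (marg x1 x2 Bs1 Bs2 HB1 HB2 _ _ cc1 cc2 (fun x => (f1 x - mu) * ind B1 x) B2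
                           (gamble_cond f1 B1 mu Hf1) (or_introl HB2in)).
      split; intros H; (eapply prodD_ext; [exact H|]); intros z; cbv beta; rewrite ?ind_conj; ring. }
    assert (E2 : forall mu, prodD Bs1 Bs2 (EP C1 P1) (EP C2 P2)
                 (fun x => (f1 (fst x) - mu) * ind (fun z => B1 (fst z)) x)
               <-> EP C1 P1 (fun x => (f1 x - mu) * ind B1 x)).
    { intros mu. rewrite <- (marg x1 x2 Bs1 Bs2 HB1 HB2 _ _ cc1 cc2 (fun x => (f1 x - mu) * ind B1 x) (fun _ => True)
                           (gamble_cond f1 B1 mu Hf1) (or_intror (fun _ => I))).
      split; intros H; (eapply prodD_ext; [exact H|]); intros z; cbv beta; rewrite ?ind_T, ?ind_fst, ?ind_snd; simpl; ring. }
    unfold prodP, natext, LP_D. split; f_equal; apply functional_extensionality; intro mu;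
      apply propositional_extensionality; [rewrite E1, E2|rewrite E2]; tauto.
  - intros f2 B2 B1 Hf2 _ HB1in.
    assert (E1 : forall mu, prodD Bs1 Bs2 (EP C1 P1) (EP C2 P2)
                 (fun x => (f2 (snd x) - mu) * ind (fun z => B1 (fst z) /\ B2 (snd z)) x)
               <-> EP C2 P2 (fun x => (f2 x - mu) * ind B2 x)).
    { intros mu. rewrite prodD_swap_iff.
      rewrite <- (marg x2 x1 Bs2 Bs1 HB2 HB1 _ _ cc2 cc1 (fun x => (f2 x - mu) * ind B2 x) B1
                           (gamble_cond f2 B2 mu Hf2) (or_introl HB1in)).
      split; intros H; (eapply prodD_ext; [exact H|]); intros z; cbv beta; rewrite ?ind_conj; simpl; ring. }
    assert (E2 : forall mu, prodD Bs1 Bs2 (EP C1 P1) (EP C2 P2)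
                 (fun x => (f2 (snd x) - mu) * ind (fun z => B2 (snd z)) x)
               <-> EP C2 P2 (fun x => (f2 x - mu) * ind B2 x)).
    { intros mu. rewrite prodD_swap_iff.
      rewrite <- (marg x2 x1 Bs2 Bs1 HB2 HB1 _ _ cc2 cc1 (fun x => (f2 x - mu) * ind B2 x) (fun _ => True)
                           (gamble_cond f2 B2 mu Hf2) (or_intror (fun _ => I))).
      split; intros H; (eapply prodD_ext; [exact H|]); intros z; cbv beta; rewrite ?ind_T, ?ind_fst, ?ind_snd; simpl; ring. }
    unfold prodP, natext, LP_D. split; f_equal; apply functional_extensionality; intro mu;
      apply propositional_extensionality; [rewrite E1, E2|rewrite E2]; tauto.
Qed.
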